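(* Let $T$ be the tournament on vertex set $\{0,1,2,3,4,5\}$ with arc set $\{(0,1),(0,3),(1,2),(1,5),(2,0),(2,4),(3,1),(3,2),(3,4),(4,0),(4,1),(4,5),(5,0),(5,2),(5,3)\}$. For every $n\geq 3$, there is a homomorphism from the directed cycle $\overrightarrow{C}_n$ to $T$.
   Context: $\overrightarrow{C}_n$ is the directed cycle on $n$ vertices (asymmetric). A homomorphism from a digraph $D$ to a digraph $H$ is a map $\phi:V(D)\to V(H)$ such that $(\phi(u),\phi(v))\in A(H)$ whenever $(u,v)\in A(D)$. *)

(* Defs.v *)
From mathcomp Require Import all_boot.
Set Implicit Arguments. Unset Strict Implicit. Unset Printing Implicit Defensive.

Definition dcycle (n : nat) : rel 'I_n :=
  fun i j => (j : nat) == (i.+1 %% n).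

Definition T_arcs : seq (nat * nat) :=
  [:: (0,1); (0,3); (1,2); (1,5); (2,0); (2,4); (3,1); (3,2); (3,4);
      (4,0); (4,1); (4,5); (5,0); (5,2); (5,3)].

Definition T_rel : rel 'I_6 := fun u v => ((u : nat), (v : nat)) \in T_arcs.

Definition is_hom (V W : Type) (E : rel V) (F : rel W) (phi : V -> W) : Prop :=
  forall u v, E u v -> F (phi u) (phi v).

(* Main.v *)
Require Import Defs.
From mathcomp Require Import all_boot.
From mathcomp Require Import zify.

Definition c3 (j : nat) : nat := match j with 0 => 0 | 1 => 1 | _ => 2 end.
Definition c4 (j : nat) : nat := match j with 0 => 0 | 1 => 3 | 2 => 2 | _ => 4 end.
Definition c5 (j : nat) : nat := match j with 0 => 0 | 1 => 3 | 2 => 1 | 3 => 2 | _ => 4 end.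
Definition cyc r j := match r with 0 => c3 j | 1 => c4 j | _ => c5 j end.
Definition g n i := if i < 3 + n %% 3 then cyc (n %% 3) i else c3 ((i - (3 + n %% 3)) %% 3).
Definition arcN a b := (a, b) \in T_arcs.

Lemma g_lt6 n i : g n i < 6.
Proof.
rewrite /g; case: ifP => _.
  case: (n %% 3) => [|[|r]] /=; [case: i => [|[|[|?]]]|case: i => [|[|[|?]]]|case: i => [|[|[|[|?]]]]]; by [].
by case: (_ %% 3) => [|[|?]].
Qed.

Lemma g_step n i : 3 <= n -> i < n -> arcN (g n i) (g n (i.+1 %% n)).
Proof.
move=> n3 lin.
have hr : n %% 3 < 3 by rewrite ltn_mod.
rewrite /g.
have [e|lt] : i.+1 = n \/ i.+1 < n by lia.
  rewrite e modnn /=.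
  have H0 : cyc (n %% 3) 0 = 0 by case: (n %% 3) => [|[|?]].
  rewrite H0.
  case: ifP => hi.
    have -> : i = 2 + n %% 3 by lia.
    by case: (n %% 3) hr => [|[|[|?]]].
  have hd := divn_eq n 3; have hi2 : 3 + n %% 3 < n by rewrite ltnNge hi.
  have -> : (i - (3 + n %% 3)) %% 3 = 2 by lia.
  by [].
rewrite (modn_small lt).
case: ifP => hi; case: ifP => hi'.
- have hi4 : i < 4 by lia.
  move: hi hi'; case: (n %% 3) hr => [|[|[|?]]] //= _;
  case: i lin lt hi4 => [|[|[|[|?]]]] //.
- have -> : i.+1 - (3 + n %% 3) = 0 by lia.
  have -> : i = 2 + n %% 3 by lia.
  by case: (n %% 3) hr => [|[|[|?]]].
- lia.
- have [h|[h|h]] : (i - (3 + n %% 3)) %% 3 = 0 /\ (i.+1 - (3 + n %% 3)) %% 3 = 1 \/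
      (i - (3 + n %% 3)) %% 3 = 1 /\ (i.+1 - (3 + n %% 3)) %% 3 = 2 \/
      (i - (3 + n %% 3)) %% 3 = 2 /\ (i.+1 - (3 + n %% 3)) %% 3 = 0 by lia.
  all: by case: h => -> ->.
Qed.

Theorem mainTheorem17 : forall n : nat, 3 <= n ->
  exists phi : 'I_n -> 'I_6, is_hom (@dcycle n) T_rel phi.
Proof.
move=> n n3.
exists (fun i => inord (g n i)).
move=> u v; rewrite /dcycle /T_rel => /eqP ->.
rewrite !inordK ?g_lt6 //.
exact: g_step.
Qed.
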